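(* Let $e_1,e_2$ be composable forward events of the LTSI of CCSK$^{\mathrm P}$. Then $e_1<e_2$ if and only if $e_1\otimes e_2$.
   Context: Names $\mathsf N$ with bijection $\overline\cdot$ onto disjoint co-names; $\mathsf L=\mathsf N\cup\overline{\mathsf N}\cup\{\tau\}$ ($\alpha$ over $\mathsf L$, $\lambda$ over $\mathsf L\setminus\{\tau\}$); keys $\mathsf K$ denumerable. CCSK processes $X::=\mathbf 0\mid\alpha.X\mid X\backslash\lambda\mid X+Y\mid X|Y\mid\alpha[k].X$; $\mathrm{keys}(X)$ keys in $X$; standard means no keys. Directions $D\in\{\mathrm L,\mathrm R\}$, $\bar{\mathrm L}=\mathrm R$, $\bar{\mathrm R}=\mathrm L$. Proof keyed labels $\theta::=\upsilon\alpha[k]\mid\upsilon\langle\upsilon_1\lambda[k],\upsilon_2\overline\lambda[k]\rangle$ ($\upsilon,\upsilon_i\in\{|_{\mathrm L},|_{\mathrm R},+_{\mathrm L},+_{\mathrm R}\}^*$), $\ell(\upsilon\alpha[k])=\alpha$, $\ell(\upsilon\langle\cdots\rangle)=\tau$, $\mathrm{key}(\theta)=k$. Forward CCSK$^{\mathrm P}$ transitions: least relation closed under (act) $\alpha.X\xrightarrow{\alpha[k]}\alpha[k].X$ if $\mathrm{keys}(X)=\emptyset$; (pre) $X\xrightarrow\theta X',\mathrm{key}(\theta)\ne k\Rightarrow\alpha[k].X\xrightarrow\theta\alpha[k].X'$; (res) $X\xrightarrow\theta X',\ell(\theta)\notin\{\lambda,\overline\lambda\}\Rightarrow X\backslash\lambda\xrightarrow\theta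 X'\backslash\lambda$; (par) $X\xrightarrow\theta X',\mathrm{key}(\theta)\notin\mathrm{keys}(Y)\Rightarrow X|Y\xrightarrow{|_{\mathrm L}\theta}X'|Y$, $Y|X\xrightarrow{|_{\mathrm R}\theta}Y|X'$; (syn) $X\xrightarrow{\upsilon_1\lambda[k]}X',Y\xrightarrow{\upsilon_2\overline\lambda[k]}Y'\Rightarrow X|Y\xrightarrow{\langle\upsilon_1\lambda[k],\upsilon_2\overline\lambda[k]\rangle}X'|Y'$; (sum) $X\xrightarrow\theta X',\mathrm{keys}(Y)=\emptyset\Rightarrow X+Y\xrightarrow{+_{\mathrm L}\theta}X'+Y$, $Y+X\xrightarrow{+_{\mathrm R}\theta}Y+X'$. Backward transitions are converses; $\bar t$ the inverse. Paths: sequences of composable transitions; rooted if the source cannot perform a backward transition; only processes reachable from standard ones are considered. Connected: path from source of one to target of the other. Relations on proof labels (least closed under rules; ''prefix'' = form $\beta[k']$; $\theta_{\mathrm L},\theta_{\mathrm R}$ components of a synchronisation label): Connectivity $\frown$: (A1) $\alpha[k]\frown\theta$; (A2) $\theta\frown\alpha[k]$ if $\theta$ not a prefix; (P1) $|_D\theta\frown|_D\theta'$ if $\theta\frown\theta'$; (P2) $|_D\theta\frown|_{\bar D}\theta'$; (C1) $+_D\theta\frown+_D\theta'$ if $\theta\frown\theta'$; (C2) $+_D\theta\frown+_{\bar D}\theta'$; (S1) $|_D\theta\frown\langle\theta_{\mathrm L},\theta_{\mathrm R}\rangle$ if $\theta\frown\theta_D$; (S2) $\langle\theta_{\mathrm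 L},\theta_{\mathrm R}\rangle\frown|_D\theta$ if $\theta_D\frown\theta$; (S3) componentwise. Dependence $\otimes$: A1, A2, C1, C2, P1, S1, S2 with $\otimes$ for $\frown$; (P2$_k$) $|_D\theta\otimes|_{\bar D}\theta'$ if equal keys; (S3) $\langle\theta_1,\theta_2\rangle\otimes\langle\theta_1',\theta_2'\rangle$ if for some $i\ne j$, $\theta_i\otimes\theta_i'$ and $\theta_j\frown\theta_j'$. Independence $\iota$: C1, P1, S1, S2, S3 with $\iota$ for $\frown$, and (P2$_k$) $|_D\theta\mathrel\iota|_{\bar D}\theta'$ if keys differ. On transitions: $t\mathrel\iota u$ iff connected and labels $\iota$. Event equivalence $\sim$: smallest equivalence with $t\sim t'$ whenever $t:P\to Q$, $u:P\to R$, $u':Q\to S$, $t':R\to S$ ($u'$ with label/direction of $u$, $t'$ of $t$) and $t\mathrel\iota u$; events are classes $[t]$; forward events are classes of forward transitions; $\bar e=[\bar t]$. $\sharp(\varepsilon,e)=0$, $\sharp(tr,e)=\sharp(r,e)+1$ if $t\in e$, $-1$ if $t\in\bar e$, unchanged otherwise. For forward events, $e\le e'$ iff every rooted path $r$ with $\sharp(r,e')>0$ has $\sharp(r,e)>0$; $e<e'$ iff $e\le e'$ and $e\ne e'$. Events $e_1,e_2$ are composable if some $t_1\in e_1$ is composable with some $t_2\in e_2$; $e_1\otimes e_2$ iff some $t_1\in e_1$, $t_2\in e_2$ have labels satisfying $\otimes$. *)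

(* Defs.v *)
From Stdlib Require Import ZArith List ClassicalEpsilon.
Import ListNotations.
Open Scope Z_scope.

Inductive vis : Type := Nm (n : nat) | Co (n : nat).
Definition co (l : vis) : vis := match l with Nm n => Co n | Co n => Nm n end.
Inductive act : Type := Vis (l : vis) | Tau.
Definition key := nat.

Inductive proc : Type :=
| Nil
| Pref (a : act) (X : proc)
| Res (X : proc) (l : vis)
| Sum (X Y : proc)
| Par (X Y : proc)
| Keyed (a : act) (k : key) (X : proc).

Fixpoint haskey (k : key) (X : proc) : Prop :=
  match X with
  | Nil => False
  | Pref _ X => haskey k X
  | Res X _ => haskey k X
  | Sum X Y => haskey k X \/ haskey k Y
  | Par X Y => haskey k X \/ haskey k Y
  | Keyed _ k' X => k' = k \/ haskey k X
  end.
Definition nokeys (X : proc) : Prop := forall k, ~ haskey k X.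
Definition standard (X : proc) : Prop := nokeys X.

Inductive side : Type := SL | SR.
Definition flip (D : side) : side := match D with SL => SR | SR => SL end.

(** Proof keyed labels: Base a k = alpha[k]; PPar D th = |_D th;
    PSum D th = +_D th; Syn thL thR = <thL, thR>.  (A label
    upsilon<...> is PPar/PSum applied to a Syn.) *)
Inductive plabel : Type :=
| Base (a : act) (k : key)
| PPar (D : side) (th : plabel)
| PSum (D : side) (th : plabel)
| Syn (thL thR : plabel).

Fixpoint lab_act (th : plabel) : act :=
  match th with
  | Base a _ => a
  | PPar _ th => lab_act th
  | PSum _ th => lab_act th
  | Syn _ _ => Tau
  end.
Fixpoint lab_key (th : plabel) : key :=
  match th with
  | Base _ k => k
  | PPar _ th => lab_key th
  | PSum _ th => lab_key th
  | Syn thL _ => lab_key thL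
  end.
Fixpoint simple (th : plabel) : Prop :=
  match th with
  | Base _ _ => True
  | PPar _ th => simple th
  | PSum _ th => simple th
  | Syn _ _ => False
  end.
Definition is_prefix (th : plabel) : Prop :=
  match th with Base _ _ => True | _ => False end.
Definition comp (D : side) (thL thR : plabel) : plabel :=
  match D with SL => thL | SR => thR end.

Inductive fstep : proc -> plabel -> proc -> Prop :=
| st_act a k X : nokeys X -> fstep (Pref a X) (Base a k) (Keyed a k X)
| st_pre a k X th X' : fstep X th X' -> lab_key th <> k ->
    fstep (Keyed a k X) th (Keyed a k X')
| st_res l X th X' : fstep X th X' -> lab_act th <> Vis l ->
    lab_act th <> Vis (co l) -> fstep (Res X l) th (Res X' l)
| st_parL X Y th X' : fstep X th X' -> ~ haskey (lab_key th) Y ->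
    fstep (Par X Y) (PPar SL th) (Par X' Y)
| st_parR X Y th X' : fstep X th X' -> ~ haskey (lab_key th) Y ->
    fstep (Par Y X) (PPar SR th) (Par Y X')
| st_syn X Y X' Y' l th1 th2 : fstep X th1 X' -> fstep Y th2 Y' ->
    simple th1 -> simple th2 -> lab_act th1 = Vis l -> lab_act th2 = Vis (co l) ->
    lab_key th1 = lab_key th2 ->
    fstep (Par X Y) (Syn th1 th2) (Par X' Y')
| st_sumL X Y th X' : fstep X th X' -> nokeys Y ->
    fstep (Sum X Y) (PSum SL th) (Sum X' Y)
| st_sumR X Y th X' : fstep X th X' -> nokeys Y ->
    fstep (Sum Y X) (PSum SR th) (Sum Y X').

Inductive conn : plabel -> plabel -> Prop :=
| cn_A1 a k th : conn (Base a k) th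
| cn_A2 th a k : ~ is_prefix th -> conn th (Base a k)
| cn_P1 D th th' : conn th th' -> conn (PPar D th) (PPar D th')
| cn_P2 D th th' : conn (PPar D th) (PPar (flip D) th')
| cn_C1 D th th' : conn th th' -> conn (PSum D th) (PSum D th')
| cn_C2 D th th' : conn (PSum D th) (PSum (flip D) th')
| cn_S1 D th thL thR : conn th (comp D thL thR) -> conn (PPar D th) (Syn thL thR)
| cn_S2 D th thL thR : conn (comp D thL thR) th -> conn (Syn thL thR) (PPar D th)
| cn_S3 thL thR thL' thR' : conn thL thL' -> conn thR thR' ->
    conn (Syn thL thR) (Syn thL' thR').

Inductive dep : plabel -> plabel -> Prop :=
| dp_A1 a k th : dep (Base a k) th
| dp_A2 th a k : ~ is_prefix th -> dep th (Base a k)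
| dp_P1 D th th' : dep th th' -> dep (PPar D th) (PPar D th')
| dp_P2k D th th' : lab_key th = lab_key th' -> dep (PPar D th) (PPar (flip D) th')
| dp_C1 D th th' : dep th th' -> dep (PSum D th) (PSum D th')
| dp_C2 D th th' : dep (PSum D th) (PSum (flip D) th')
| dp_S1 D th thL thR : dep th (comp D thL thR) -> dep (PPar D th) (Syn thL thR)
| dp_S2 D th thL thR : dep (comp D thL thR) th -> dep (Syn thL thR) (PPar D th)
| dp_S3 thL thR thL' thR' :
    (dep thL thL' /\ conn thR thR') \/ (dep thR thR' /\ conn thL thL') ->
    dep (Syn thL thR) (Syn thL' thR').

Inductive ind : plabel -> plabel -> Prop :=
| in_P1 D th th' : ind th th' -> ind (PPar D th) (PPar D th')
| in_P2k D th th' : lab_key th <> lab_key th' -> ind (PPar D th) (PPar (flip D) th')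
| in_C1 D th th' : ind th th' -> ind (PSum D th) (PSum D th')
| in_S1 D th thL thR : ind th (comp D thL thR) -> ind (PPar D th) (Syn thL thR)
| in_S2 D th thL thR : ind (comp D thL thR) th -> ind (Syn thL thR) (PPar D th)
| in_S3 thL thR thL' thR' : ind thL thL' -> ind thR thR' ->
    ind (Syn thL thR) (Syn thL' thR').

Record trans : Type := Tr { src : proc; fwd : bool; lab : plabel; tgt : proc }.
Definition valid (t : trans) : Prop :=
  if fwd t then fstep (src t) (lab t) (tgt t) else fstep (tgt t) (lab t) (src t).
Definition inv (t : trans) : trans := Tr (tgt t) (negb (fwd t)) (lab t) (src t).

Inductive vpath : proc -> list trans -> proc -> Prop :=
| vp_nil P : vpath P [] P
| vp_cons t r Q : valid t -> vpath (tgt t) r Q -> vpath (src t) (t :: r) Q.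

(** Only processes reachable from standard ones are considered. *)
Definition reachable (P : proc) : Prop :=
  exists S r, standard S /\ vpath S r P.
Definition is_transition (t : trans) : Prop := valid t /\ reachable (src t).

Definition no_back (P : proc) : Prop := ~ exists th Q, fstep Q th P.
Definition rooted_path (r : list trans) : Prop :=
  exists P Q, reachable P /\ no_back P /\ vpath P r Q.

Definition connected (t u : trans) : Prop := exists r, vpath (src t) r (tgt u).
Definition tind (t u : trans) : Prop := connected t u /\ ind (lab t) (lab u).

Inductive evsim : trans -> trans -> Prop :=
| es_refl t : is_transition t -> evsim t t
| es_sym t t' : evsim t t' -> evsim t' t
| es_trans t t' t'' : evsim t t' -> evsim t' t'' -> evsim t t''
| es_sq t u u' t' :
    is_transition t -> is_transition u -> is_transition u' -> is_transition t' ->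
    src u = src t -> src u' = tgt t -> src t' = tgt u -> tgt t' = tgt u' ->
    lab u' = lab u -> fwd u' = fwd u -> lab t' = lab t -> fwd t' = fwd t ->
    tind t u -> evsim t t'.

Definition ev (t : trans) : trans -> Prop := evsim t.

(** #(r, e), where eb is the inverse event of e *)
Fixpoint sharp (e eb : trans -> Prop) (r : list trans) : Z :=
  match r with
  | [] => 0
  | t :: r' =>
      if excluded_middle_informative (e t) then sharp e eb r' + 1
      else if excluded_middle_informative (eb t) then sharp e eb r' - 1
      else sharp e eb r'
  end.

(** causality on forward events [t1], [t2] (inverse event of [t] is [inv t]) *)
Definition ev_le (t1 t2 : trans) : Prop :=
  forall r, rooted_path r ->
    sharp (ev t2) (ev (inv t2)) r > 0 -> sharp (ev t1) (ev (inv t1)) r > 0.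
Definition ev_lt (t1 t2 : trans) : Prop :=
  ev_le t1 t2 /\ ~ (forall x, ev t1 x <-> ev t2 x).

Definition ev_composable (e1 e2 : trans -> Prop) : Prop :=
  exists u1 u2, e1 u1 /\ e2 u2 /\ tgt u1 = src u2.
Definition ev_dep (e1 e2 : trans -> Prop) : Prop :=
  exists u1 u2, e1 u1 /\ e2 u2 /\ dep (lab u1) (lab u2).

(* Main.v *)
Require Import Defs.
From Stdlib Require Import ZArith List ClassicalEpsilon Classical Lia.
Import ListNotations.

Lemma keys_new X th X' : fstep X th X' -> haskey (lab_key th) X'.
Proof. induction 1; simpl in *; auto. Qed.

Lemma keys_fresh X th X' : fstep X th X' -> ~ haskey (lab_key th) X.
Proof.
  induction 1; simpl in *; try tauto.
  - intros h; apply (H (k)); exact h.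
  - intros [h|h]; [congruence|tauto].
  - intros [h|h]; [tauto| apply IHfstep2; congruence].
  - unfold nokeys in *; firstorder.
  - unfold nokeys in *; firstorder.
Qed.

Lemma keys_mono X th X' k : fstep X th X' -> haskey k X -> haskey k X'.
Proof. induction 1; simpl in *; unfold nokeys in *; firstorder. Qed.

Lemma keys_back X th X' k : fstep X th X' -> haskey k X' -> k = lab_key th \/ haskey k X.
Proof.
  induction 1; simpl in *; unfold nokeys in *; try (firstorder; fail).
  - intros [h|h]; [destruct (IHfstep1 h); tauto| destruct (IHfstep2 h); [left; congruence| tauto]].
Qed.

Lemma det X1 a Y : fstep X1 a Y -> forall X2 b, fstep X2 b Y -> lab_key a = lab_key b -> a = b /\ X1 = X2.
Proof.
  induction 1; intros X2 b HH Hk; inversion HH; subst; simpl in *.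
  all: try (split; reflexivity).
  all: try (match goal with
        | h : fstep _ ?th ?Z, n : nokeys ?Z |- _ => exfalso; exact (n _ (keys_new _ _ _ h)) end).
  all: try (exfalso; match goal with
        | h : fstep _ ?th ?Z, n : ~ haskey _ ?Z |- _ => apply n; pose proof (keys_new _ _ _ h); congruence end).
  all: try (destruct (IHfstep _ _ ltac:(eassumption) Hk); subst; split; reflexivity).
  all: try (destruct (IHfstep1 _ _ ltac:(eassumption) Hk); destruct (IHfstep2 _ _ ltac:(eassumption) ltac:(congruence)); subst; split; reflexivity).
Qed.

Ltac side := let h := fresh in intro h;
  match goal with n : ~ haskey _ _ |- _ => apply n; eapply keys_mono; eassumption end.

Lemma rsq Z1 a Y : fstep Z1 a Y -> forall Z2 b, fstep Z2 b Y -> lab_key a <> lab_key b ->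
  exists Z0, fstep Z0 b Z1 /\ fstep Z0 a Z2 /\ ind a b.
Proof.
  induction 1; intros Z2 b HH Hk; inversion HH; subst; simpl in *.
  all: try (exfalso; congruence).
  all: try (match goal with
        | h : fstep _ ?th ?Z, n : nokeys ?Z |- _ => exfalso; exact (n _ (keys_new _ _ _ h)) end).
  - destruct (IHfstep _ _ ltac:(eassumption) Hk) as (Z0&h1&h2&h3).
    exists (Keyed a k Z0); repeat split; auto; constructor; auto.
  - destruct (IHfstep _ _ ltac:(eassumption) Hk) as (Z0&h1&h2&h3).
    exists (Res Z0 l); repeat split; auto; constructor; auto.
  - destruct (IHfstep _ _ ltac:(eassumption) Hk) as (Z0&h1&h2&h3).
    exists (Par Z0 Y); repeat split; [constructor; auto| constructor; auto| constructor; auto].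
  - exists (Par X X0); repeat split.
    + constructor; auto. side.
    + constructor; auto. side.
    + apply (in_P2k SL); auto.
  - destruct (IHfstep _ _ ltac:(eassumption) Hk) as (Z0&h1&h2&h3).
    exists (Par Z0 Y0); repeat split.
    + econstructor; eauto.
    + constructor; auto. side.
    + apply (in_S1 SL); auto.
  - exists (Par X0 X); repeat split.
    + constructor; auto. side.
    + constructor; auto. side.
    + apply (in_P2k SR); auto.
  - destruct (IHfstep _ _ ltac:(eassumption) Hk) as (Z0&h1&h2&h3).
    exists (Par Y Z0); repeat split; [constructor; auto| constructor; auto| constructor; auto].
  - edestruct IHfstep as (Z0&h1&h2&h3); [eassumption| simpl; congruence| ].
    exists (Par X0 Z0); repeat split.
    + econstructor; eauto.
    + constructor; auto. side.
    + apply (in_S1 SR); auto.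
  - destruct (IHfstep1 _ _ ltac:(eassumption) Hk) as (Z0&h1&h2&h3).
    exists (Par Z0 Y); repeat split.
    + constructor; auto. side.
    + econstructor; eauto.
    + apply (in_S2 SL); auto.
  - destruct (IHfstep2 _ _ ltac:(eassumption) ltac:(congruence)) as (Z0&h1&h2&h3).
    exists (Par X Z0); repeat split.
    + constructor; auto. side.
    + econstructor; eauto.
    + apply (in_S2 SR); auto.
  - destruct (IHfstep1 _ _ ltac:(eassumption) Hk) as (Z0&h1&h2&h3).
    destruct (IHfstep2 _ _ ltac:(eassumption) ltac:(congruence)) as (Z0'&h1'&h2'&h3').
    exists (Par Z0 Z0'); repeat split.
    + econstructor; eauto.
    + econstructor; eauto.
    + constructor; auto.
  - destruct (IHfstep _ _ ltac:(eassumption) Hk) as (Z0&h1&h2&h3).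
    exists (Sum Z0 Y); repeat split; [constructor; auto| constructor; auto| constructor; auto].
  - destruct (IHfstep _ _ ltac:(eassumption) Hk) as (Z0&h1&h2&h3).
    exists (Sum Y Z0); repeat split; [constructor; auto| constructor; auto| constructor; auto].
Qed.

Lemma nk_contra : forall X th X', fstep X th X' -> nokeys X' -> False.
Proof. intros X th X' h n. exact (n _ (keys_new _ _ _ h)). Qed.

Lemma conn_seq P a Q : fstep P a Q -> forall b S, fstep Q b S -> conn a b.
Proof.
  induction 1; intros b S HH; inversion HH; subst; simpl in *.
  all: try (exfalso; eapply nk_contra; eassumption).
  all: try constructor; eauto.
  all: try (apply (cn_P2 SL)); try (apply (cn_P2 SR)).
  all: try (apply (cn_S1 SL); simpl; eauto); try (apply (cn_S1 SR); simpl; eauto).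
  all: try (apply (cn_S2 SL); simpl; eauto); try (apply (cn_S2 SR); simpl; eauto).
Qed.

Lemma side_back Y b Y' k : fstep Y b Y' -> ~ haskey k Y -> k <> lab_key b -> ~ haskey k Y'.
Proof. intros h n d h'. destruct (keys_back _ _ _ _ h h'); tauto. Qed.

Lemma kdiff X a X' b X'' : fstep X a X' -> fstep X' b X'' -> lab_key a <> lab_key b.
Proof. intros h1 h2 e. apply (keys_fresh _ _ _ h2). rewrite <- e. exact (keys_new _ _ _ h1). Qed.

Ltac cs := match goal with h1 : fstep _ ?a ?B, h2 : fstep ?B ?b _ |- conn ?a ?b => exact (conn_seq _ _ _ h1 _ _ h2) end.
Ltac kd := let e := fresh in intro e;
  match goal with h1 : fstep ?A ?t ?B, h2 : fstep ?B ?c ?C |- _ =>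
    apply (kdiff _ _ _ _ _ h1 h2); simpl in *; congruence end.

Lemma fsq P a Q : fstep P a Q -> forall b S, fstep Q b S -> ~ dep a b ->
  exists R, fstep P b R /\ fstep R a S /\ ind a b.
Proof.
  induction 1; intros b S HH Hd; inversion HH; subst; simpl in *.
  all: try (exfalso; eapply nk_contra; eassumption).
  all: try (exfalso; apply Hd; constructor; fail).
  - destruct (IHfstep _ _ ltac:(eassumption) Hd) as (R&h1&h2&h3).
    exists (Keyed a k R); repeat split; auto; constructor; auto.
  - destruct (IHfstep _ _ ltac:(eassumption) Hd) as (R&h1&h2&h3).
    exists (Res R l); repeat split; auto; constructor; auto.
  - edestruct IHfstep as (R&h1&h2&h3); [eassumption| intro; apply Hd; constructor; assumption| ].
    exists (Par R Y); repeat split; constructor; auto.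
  - assert (kd : lab_key th <> lab_key th0) by (intro e; apply (H6); rewrite <- e; eapply keys_new; eauto).
    eexists; split; [apply st_parR; [eassumption| side] | split; [apply st_parL; [eassumption| eapply side_back; eauto] | apply (in_P2k SL); auto]].
  - edestruct IHfstep as (R&h1&h2&h3); [eassumption| intro; apply Hd; apply (dp_S1 SL); simpl; assumption| ].
    eexists; split; [eapply st_syn; eauto| split].
    + constructor; auto. eapply side_back; eauto. kd.
    + apply (in_S1 SL); auto.
  - assert (kd : lab_key th <> lab_key th0) by (intro e; apply (H6); rewrite <- e; eapply keys_new; eauto).
    eexists; split; [apply st_parL; [eassumption| side] | split; [apply st_parR; [eassumption| eapply side_back; eauto] | apply (in_P2k SR); auto]].
  - edestruct IHfstep as (R&h1&h2&h3); [eassumption| intro; apply Hd; constructor; assumption| ].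
    exists (Par Y R); repeat split; constructor; auto.
  - edestruct IHfstep as (R&h1&h2&h3); [eassumption| intro; apply Hd; apply (dp_S1 SR); simpl; eassumption| ].
    eexists; split; [eapply st_syn; eauto| split].
    + constructor; auto. eapply side_back; eauto. kd.
    + apply (in_S1 SR); auto.
  - edestruct IHfstep1 as (R&h1&h2&h3); [eassumption| intro; apply Hd; apply (dp_S2 SL); simpl; eassumption| ].
    exists (Par R Y); repeat split.
    + constructor; auto. side.
    + econstructor; eauto.
    + apply (in_S2 SL); auto.
  - edestruct IHfstep2 as (R&h1&h2&h3); [eassumption| intro; apply Hd; apply (dp_S2 SR); simpl; eassumption| ].
    exists (Par X R); repeat split.
    + constructor; auto. side.
    + econstructor; eauto.
    + apply (in_S2 SR); auto.
  - edestruct IHfstep1 as (R&h1&h2&h3); [eassumption| intro; apply Hd; apply dp_S3; left; split; [assumption| cs] | ].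
    edestruct IHfstep2 as (R'&h1'&h2'&h3'); [eassumption| intro; apply Hd; apply dp_S3; right; split; [assumption| cs] | ].
    exists (Par R R'); repeat split.
    + econstructor; eauto.
    + econstructor; eauto.
    + constructor; auto.
  - edestruct IHfstep as (R&h1&h2&h3); [eassumption| intro; apply Hd; constructor; assumption| ].
    exists (Sum R Y); repeat split; constructor; auto.
  - edestruct IHfstep as (R&h1&h2&h3); [eassumption| intro; apply Hd; constructor; assumption| ].
    exists (Sum Y R); repeat split; constructor; auto.
Qed.

Lemma flip_flip D : flip (flip D) = D. Proof. destruct D; reflexivity. Qed.

Lemma ind_sym a b : ind a b -> ind b a.
Proof.
  induction 1; try (constructor; auto; fail).
  - pose proof (in_P2k (flip D) th' th) as h. rewrite flip_flip in h. apply h. auto.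
Qed.

Lemma dep_ind a : forall b, dep a b -> ind a b -> False.
Proof.
  induction a; intros b hd hi; inversion hd; subst; inversion hi; subst; simpl in *.
  all: try (destruct D; discriminate).
  all: try (destruct D; simpl in *; discriminate).
  all: try congruence.
  all: try (eapply IHa; eassumption).
  - destruct D; simpl in *; eauto.
  - match goal with h : _ \/ _ |- _ => destruct h as [[h1 h2]|[h1 h2]] end; eauto.
Qed.

Lemma vpath_snoc A r B t : vpath A r B -> valid t -> src t = B -> vpath A (r ++ [t]) (tgt t).
Proof.
  induction 1; intros hv hs; simpl.
  - subst. constructor; auto. constructor.
  - constructor; auto.
Qed.

Lemma reach_step t : reachable (src t) -> valid t -> reachable (tgt t).
Proof.
  intros (S & r & hs & hp) hv. exists S, (r ++ [t]); split; auto. apply (vpath_snoc _ _ _ _ hp); auto.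
Qed.

Lemma reach_fwd X th Y : reachable X -> fstep X th Y -> reachable Y.
Proof. intros h1 h2. apply (reach_step (Tr X true th Y)); auto. Qed.

Lemma reach_bwd X th Y : reachable Y -> fstep X th Y -> reachable X.
Proof. intros h1 h2. apply (reach_step (Tr Y false th X)); auto. Qed.

Lemma valid_inv t : valid (inv t) <-> valid t.
Proof. destruct t as [s f l g]; destruct f; unfold valid, inv; simpl; tauto. Qed.

Lemma inv_inv t : inv (inv t) = t.
Proof. destruct t as [s f l g]; destruct f; reflexivity. Qed.

Lemma trans_inv t : is_transition t -> is_transition (inv t).
Proof.
  intros [hv hr]; split.
  - apply valid_inv; auto.
  - simpl. apply reach_step; auto.
Qed.

Lemma E1 a b : evsim a b -> is_transition a /\ is_transition b /\ lab a = lab b /\ fwd a = fwd b.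
Proof.
  induction 1; intuition congruence.
Qed.

Lemma E2 a b : evsim a b -> evsim (inv a) (inv b).
Proof.
  induction 1.
  - apply es_refl, trans_inv; auto.
  - apply es_sym; auto.
  - eapply es_trans; eauto.
  - apply (es_sq (inv t) u' u (inv t')); try apply trans_inv; auto; simpl; try congruence.
    match goal with hti : tind _ _ |- _ => destruct hti as [_ hi] end. split.
    + exists [u']. simpl. rewrite <- H4. constructor. apply H1. constructor.
    + simpl; rewrite H7; exact hi.
Qed.

Lemma fwd_valid w : fwd w = true -> valid w -> fstep (src w) (lab w) (tgt w).
Proof. unfold valid; intros h; rewrite h; auto. Qed.

Inductive fp : proc -> proc -> Prop :=
| fp_nil A : fp A A
| fp_snoc A B th C : fp A B -> fstep B th C -> fp A C.

Lemma fp_keys A B k : fp A B -> haskey k A -> haskey k B.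
Proof. induction 1; auto. intros h; eapply keys_mono; eauto. Qed.

Lemma fp_trans A B C : fp A B -> fp B C -> fp A C.
Proof. intros h1 h2; revert h1; induction h2; intros h1; auto. eapply fp_snoc; [apply IHh2; exact h1| eassumption]. Qed.

Definition H (t : trans) (X : proc) : Prop := exists w, ev t w /\ fp (tgt w) X.

Lemma ev_mem t w : ev t w -> fwd t = true ->
  is_transition w /\ fwd w = true /\ lab w = lab t /\ fstep (src w) (lab t) (tgt w).
Proof.
  intros h ft. destruct (E1 _ _ h) as (h1 & h2 & h3 & h4).
  assert (fwd w = true) by congruence.
  split; [exact h2| split; [exact H0| split; [congruence| ]]].
  rewrite h3. apply fwd_valid; auto. apply h2.
Qed.

Lemma KL t (ft : fwd t = true) w (hw : ev t w) : forall Y, fp (tgt w) Y ->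
  forall X th, fstep X th Y -> reachable X -> ~ ev t (Tr X true th Y) ->
  exists w', ev t w' /\ fp (tgt w') X.
Proof.
  destruct (ev_mem _ _ hw ft) as (hwt & fw & lw & sw).
  intros Y hfp. remember (tgt w) as T eqn:eT.
  induction hfp as [ | T' Y' sg Y hfp IH hs]; intros X th hX hr hn; subst.
  - destruct (PeanoNat.Nat.eq_dec (lab_key (lab t)) (lab_key th)) as [e|e].
    + destruct (det _ _ _ sw _ _ hX e) as [e1 e2]. subst.
      exfalso; apply hn. destruct w as [s f l g]; simpl in *; subst. exact hw.
    + destruct (rsq _ _ _ sw _ _ hX e) as (Z0 & h1 & h2 & h3).
      assert (rZ : reachable Z0) by (eapply reach_bwd; [apply hwt| exact h1]).
      exists (Tr Z0 true (lab t) X); split; [ | constructor].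
      eapply es_trans; [exact hw| ]. apply es_sym.
      apply (es_sq (Tr Z0 true (lab t) X) (Tr Z0 true th (src w)) (Tr X true th (tgt w)) w);
        simpl; try (split; simpl; auto; fail); try congruence.
      split.
      * exists [Tr Z0 true th (src w)]. apply (vp_cons (Tr Z0 true th (src w))); simpl; auto. constructor.
      * simpl. exact h3.
  - destruct (PeanoNat.Nat.eq_dec (lab_key sg) (lab_key th)) as [e|e].
    + destruct (det _ _ _ hs _ _ hX e) as [e1 e2]. subst. exists w; auto.
    + destruct (rsq _ _ _ hs _ _ hX e) as (Z0 & h1 & h2 & h3).
      assert (rZ : reachable Z0) by (eapply reach_bwd; [exact hr| exact h2]).
      destruct (IH eq_refl sw Z0 th h1 rZ) as (w' & hw' & hf').
      * intro hv. apply hn. eapply es_trans; [exact hv| ].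
        apply (es_sq (Tr Z0 true th Y') (Tr Z0 true sg X) (Tr Y' true sg Y) (Tr X true th Y));
          simpl; try (split; simpl; auto; fail); try congruence.
        -- split; simpl; auto. eapply reach_fwd; eauto.
        -- split.
           ++ exists [Tr Z0 true sg X]. apply (vp_cons (Tr Z0 true sg X)); simpl; auto. constructor.
           ++ simpl. apply ind_sym; exact h3.
      * exists w'; split; auto. econstructor; eauto.
Qed.

Lemma S1 t v : fwd t = true -> ev t v -> H t (tgt v) /\ ~ H t (src v).
Proof.
  intros ft hv. destruct (ev_mem _ _ hv ft) as (hvt & fv & lv & sv).
  split.
  - exists v; split; auto. constructor.
  - intros (w & hw & hf). destruct (ev_mem _ _ hw ft) as (_ & _ & _ & sw).
    apply (keys_fresh _ _ _ sv). eapply fp_keys; eauto. eapply keys_new; eauto.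
Qed.

Lemma S2 t v : fwd t = true -> ev (inv t) v -> H t (src v) /\ ~ H t (tgt v).
Proof.
  intros ft hv. apply E2 in hv. rewrite inv_inv in hv.
  destruct (S1 _ _ ft hv) as [a b]. simpl in *. auto.
Qed.

Lemma S3 t v : fwd t = true -> valid v -> reachable (src v) -> ~ ev t v -> ~ ev (inv t) v ->
  (H t (src v) <-> H t (tgt v)).
Proof.
  intros ft hv hr n1 n2. destruct (fwd v) eqn:fv.
  - assert (sv : fstep (src v) (lab v) (tgt v)) by (apply fwd_valid; auto).
    split.
    + intros (w & hw & hf). exists w; split; auto. econstructor; eauto.
    + intros (w & hw & hf). eapply KL; eauto.
      destruct v as [s f l g]; simpl in *; subst; auto.
  - assert (sv : fstep (tgt v) (lab v) (src v)) by (unfold valid in hv; rewrite fv in hv; auto).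
    split.
    + intros (w & hw & hf). eapply KL; eauto.
      * eapply reach_step; eauto.
      * intro h. apply n2. apply E2 in h.
        destruct v as [s f l g]; simpl in *; subst; exact h.
    + intros (w & hw & hf). exists w; split; auto. econstructor; eauto.
Qed.

Definition hz (t : trans) (X : proc) : Z :=
  if excluded_middle_informative (H t X) then 1%Z else 0%Z.

Lemma hz1 t X : H t X -> hz t X = 1%Z.
Proof. unfold hz; intros h; destruct excluded_middle_informative; tauto. Qed.
Lemma hz0 t X : ~ H t X -> hz t X = 0%Z.
Proof. unfold hz; intros h; destruct excluded_middle_informative; tauto. Qed.

Lemma Pot t : fwd t = true -> forall A r B, vpath A r B -> reachable A ->
  sharp (ev t) (ev (inv t)) r = (hz t B - hz t A)%Z.
Proof.
  intros ft A r B hp. induction hp as [|t0 r Q hv hp IHhp]; intros hr.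
  - simpl. ring.
  - simpl. assert (hr' : reachable (tgt t0)) by (apply reach_step; auto).
    rewrite (IHhp hr').
    destruct excluded_middle_informative as [h|h].
    + destruct (S1 _ _ ft h) as [a b]. rewrite (hz1 _ _ a), (hz0 _ _ b). lia.
    + destruct excluded_middle_informative as [h'|h'].
      * destruct (S2 _ _ ft h') as [a b]. rewrite (hz1 _ _ a), (hz0 _ _ b). lia.
      * pose proof (S3 _ _ ft hv hr h h') as e.
        destruct (classic (H t (src t0))) as [c|c].
        -- rewrite (hz1 _ _ c), (hz1 _ _ (proj1 e c)). lia.
        -- assert (nn : ~ H t (tgt t0)) by tauto. rewrite (hz0 _ _ c), (hz0 _ _ nn). lia.
Qed.

Lemma noback_H t P : fwd t = true -> no_back P -> ~ H t P.
Proof.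
  intros ft nb (w & hw & hf). inversion hf; subst.
  - apply nb. destruct (ev_mem _ _ hw ft) as (_ & _ & _ & sw). eauto.
  - apply nb. eauto.
Qed.

Lemma CL t1 th2 : fwd t1 = true -> dep (lab t1) th2 -> forall a b, evsim a b -> lab a = th2 -> fwd a = true ->
  (H t1 (src a) <-> H t1 (src b)).
Proof.
  intros ft hd a b hab. induction hab; intros la fa.
  - tauto.
  - destruct (E1 _ _ hab) as (_ & _ & e1 & e2). symmetry; apply IHhab; congruence.
  - destruct (E1 _ _ hab1) as (_ & _ & e1 & e2).
    rewrite (IHhab1 la fa). apply IHhab2; congruence.
  - assert (n1 : ~ ev t1 u).
    { intro h. destruct (ev_mem _ _ h ft) as (_ & _ & lu & _).
      match goal with hti : tind _ _ |- _ => destruct hti as [_ hi] end. rewrite la, lu in hi. exact (dep_ind _ _ hd (ind_sym _ _ hi)). }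
    assert (n2 : ~ ev (inv t1) u).
    { intro h. destruct (E1 _ _ h) as (_ & _ & lu & _). simpl in lu.
      match goal with hti : tind _ _ |- _ => destruct hti as [_ hi] end. rewrite la, <- lu in hi. exact (dep_ind _ _ hd (ind_sym _ _ hi)). }
    match goal with hu0 : is_transition u |- _ => destruct hu0 as [hv hr] end.
    pose proof (S3 _ _ ft hv hr n1 n2) as e.
    match goal with q : src u = src t |- _ => rewrite q in e end.
    match goal with q : src t' = tgt u |- _ => rewrite q end. exact e.
Qed.

Theorem lemma7p2 (t1 t2 : trans) :
  is_transition t1 -> fwd t1 = true ->
  is_transition t2 -> fwd t2 = true ->
  ev_composable (ev t1) (ev t2) ->
  (ev_lt t1 t2 <-> ev_dep (ev t1) (ev t2)).
Proof.
  intros ht1 f1 ht2 f2 (u1 & u2 & hu1 & hu2 & ec).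
  destruct (ev_mem _ _ hu1 f1) as (ut1 & fu1 & lu1 & su1).
  destruct (ev_mem _ _ hu2 f2) as (ut2 & fu2 & lu2 & su2).
  rewrite <- ec in su2.
  pose proof (kdiff _ _ _ _ _ su1 su2) as kdf.
  assert (nbS : forall S0, standard S0 -> no_back S0).
  { intros S0 hs (th & Q & hq). exact (hs _ (keys_new _ _ _ hq)). }
  split.
  - intros [hle _]. exists t1, t2. split; [apply es_refl; auto| split; [apply es_refl; auto| ]].
    apply NNPP; intro nd.
    destruct (fsq _ _ _ su1 _ _ su2 nd) as (R & h1 & h2 & h3).
    assert (rP : reachable (src u1)) by apply ut1.
    assert (hu : ev t2 (Tr (src u1) true (lab t2) R)).
    { eapply es_trans; [exact hu2| ]. apply es_sym.
      apply (es_sq (Tr (src u1) true (lab t2) R) u1 (Tr R true (lab t1) (tgt u2)) u2);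
        simpl; auto; try congruence.
      - split; simpl; auto.
      - split; simpl; auto. eapply reach_fwd; eauto.
      - split.
        + exists [u1]. simpl. apply vp_cons; [apply ut1| constructor].
        + simpl. rewrite lu1. apply ind_sym; exact h3. }
    destruct rP as (S0 & r0 & hs & hp).
    assert (hpr : vpath S0 (r0 ++ [Tr (src u1) true (lab t2) R]) R).
    { apply (vpath_snoc _ _ _ (Tr (src u1) true (lab t2) R) hp); simpl; auto. }
    assert (rS : reachable S0) by (exists S0, []; split; auto; constructor).
    assert (hrt : rooted_path (r0 ++ [Tr (src u1) true (lab t2) R])).
    { exists S0, R; split; auto. }
    specialize (hle _ hrt).
    rewrite (Pot t2 f2 _ _ _ hpr rS), (Pot t1 f1 _ _ _ hpr rS) in hle.
    rewrite (hz0 _ _ (noback_H _ _ f2 (nbS _ hs))), (hz0 _ _ (noback_H _ _ f1 (nbS _ hs))) in hle.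
    assert (HR : H t2 R) by (exists (Tr (src u1) true (lab t2) R); split; [exact hu| constructor]).
    rewrite (hz1 _ _ HR) in hle.
    assert (nH : ~ H t1 R).
    { intros (w & hw & hf). destruct (ev_mem _ _ hw f1) as (_ & _ & _ & sw).
      pose proof (fp_keys _ _ _ hf (keys_new _ _ _ sw)) as hk.
      destruct (keys_back _ _ _ _ h1 hk) as [e|e].
      - exact (kdf e).
      - exact (keys_fresh _ _ _ su1 e). }
    rewrite (hz0 _ _ nH) in hle. lia.
  - intros (a & b & ha & hb & hd).
    destruct (ev_mem _ _ ha f1) as (_ & _ & la & _).
    destruct (ev_mem _ _ hb f2) as (_ & _ & lb & _).
    rewrite la, lb in hd.
    split.
    + intros r (P0 & Q & hr & nb & hp) hs2.
      rewrite (Pot t2 f2 _ _ _ hp hr), (hz0 _ _ (noback_H _ _ f2 nb)) in hs2.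
      rewrite (Pot t1 f1 _ _ _ hp hr), (hz0 _ _ (noback_H _ _ f1 nb)).
      assert (H2Q : H t2 Q).
      { apply NNPP; intro n. rewrite (hz0 _ _ n) in hs2. lia. }
      destruct H2Q as (w & hw & hf).
      assert (e : evsim u2 w) by (eapply es_trans; [apply es_sym; exact hu2| exact hw]).
      pose proof (CL t1 (lab t2) f1 hd _ _ e lu2 fu2) as cl.
      assert (hsrc : H t1 (src u2)) by (exists u1; split; [exact hu1| rewrite ec; constructor]).
      apply cl in hsrc.
      destruct hsrc as (w1 & hw1 & hf1).
      destruct (ev_mem _ _ hw f2) as (_ & _ & _ & sw).
      assert (H1Q : H t1 Q).
      { exists w1; split; auto. eapply fp_trans; [ | exact hf]. eapply fp_snoc; eauto. }
      rewrite (hz1 _ _ H1Q). lia.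
    + intro hall. assert (h : ev t1 t2) by (apply hall; apply es_refl; auto).
      destruct (ev_mem _ _ h f1) as (_ & _ & l2 & _).
      apply kdf. rewrite l2. reflexivity.
Qed.
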